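(* (i) If $(\mathbf A,\mathbf b)\in\mathbb C^{m\times(d+1)}$ is affine phase retrievable for $\mathbb C^d$, then $m\ge 3d$. (ii) Let $B=(\mathbf a_1,\ldots,\mathbf a_d)\in\mathbb C^{d\times d}$ be nonsingular and set $\mathbf A=(B,B,B)^\top\in\mathbb C^{3d\times d}$. Let $\mathbf b=(b_{11},\ldots,b_{d1},b_{12},\ldots,b_{d2},b_{13},\ldots,b_{d3})^\top\in\mathbb C^{3d}$ be such that for each $1\le j\le d$ the points $b_{j1},b_{j2},b_{j3}$ are not collinear in $\mathbb C$. Then $(\mathbf A,\mathbf b)$ is affine phase retrievable for $\mathbb C^d$.
   Context: For $\mathbf u,\mathbf v\in\mathbb C^d$, $\langle\mathbf u,\mathbf v\rangle=\sum_i\overline{u_i}v_i$. A pair $(\mathbf A,\mathbf b)$ with $\mathbf A=(\mathbf a_1,\ldots,\mathbf a_m)^\top\in\mathbb C^{m\times d}$ and $\mathbf b=(b_1,\ldots,b_m)^\top\in\mathbb C^m$ (viewed as a matrix in $\mathbb C^{m\times(d+1)}$) is called affine phase retrievable for $\mathbb C^d$ if the map $\mathbf x\mapsto(|\langle\mathbf a_1,\mathbf x\rangle+b_1|,\ldots,|\langle\mathbf a_m,\mathbf x\rangle+b_m|)$ is injective on $\mathbb C^d$. *)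

(* Defs.v *)
From HB Require Import structures.
From mathcomp Require Import all_boot all_order all_algebra.
From mathcomp Require Import complex reals.
Set Implicit Arguments. Unset Strict Implicit. Unset Printing Implicit Defensive.
Import Order.TTheory GRing.Theory Num.Theory.
Local Open Scope ring_scope.
Local Open Scope complex_scope.

Definition cinner (R : realType) (d : nat) (u v : 'cV[R[i]]_d) : R[i] :=
  \sum_(k < d) (u k ord0)^* * v k ord0.

Definition affine_meas (R : realType) (m d : nat)
    (A : 'M[R[i]]_(m, d)) (b : 'cV[R[i]]_m) (x : 'cV[R[i]]_d) : 'cV[R[i]]_m :=
  \col_(k < m) `| cinner (row k A)^T x + b k ord0 |.

Definition affine_phase_retrievable (R : realType) (m d : nat)
    (A : 'M[R[i]]_(m, d)) (b : 'cV[R[i]]_m) : Prop :=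
  injective (affine_meas A b).

Definition collinear (R : realType) (z1 z2 z3 : R[i]) : Prop :=
  exists (p w : R[i]) (t1 t2 t3 : R), w != 0 /\
    z1 = p + t1%:C * w /\ z2 = p + t2%:C * w /\ z3 = p + t3%:C * w.

(* Main.v *)
Require Import Defs.
From HB Require Import structures.
From mathcomp Require Import all_boot all_order all_algebra.
From mathcomp Require Import complex reals ring lra zify.
Set Implicit Arguments. Unset Strict Implicit. Unset Printing Implicit Defensive.
Import Order.TTheory GRing.Theory Num.Theory.
Local Open Scope ring_scope.
Local Open Scope complex_scope.

Section S.
Variable R : realType.

Lemma normE (z : R[i]) : `|z| ^+ 2 = ((complex.Re z)^+2 + (complex.Im z)^+2)%:C.
Proof. by rewrite add_Re2_Im2. Qed.

Lemma norm_eq (z1 z2 : R[i]) : `|z1| = `|z2| <-> (complex.Re z1)^+2 + (complex.Im z1)^+2 = (complex.Re z2)^+2 + (complex.Im z2)^+2.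
Proof.
split=> [h|h].
  by apply: complexI; rewrite -!normE h.
apply/eqP; rewrite -(@eqrXn2 _ 2) // ?normr_ge0 // !normE h //.
Qed.

Lemma ReD (x y : R[i]) : complex.Re (x + y) = complex.Re x + complex.Re y.
Proof. by case: x; case: y. Qed.
Lemma ImD (x y : R[i]) : complex.Im (x + y) = complex.Im x + complex.Im y.
Proof. by case: x; case: y. Qed.
Lemma ReN (x : R[i]) : complex.Re (- x) = - complex.Re x.
Proof. by case: x. Qed.
Lemma ImN (x : R[i]) : complex.Im (- x) = - complex.Im x.
Proof. by case: x. Qed.
Lemma ReM (x y : R[i]) : complex.Re (x * y) = complex.Re x * complex.Re y - complex.Im x * complex.Im y.
Proof. by case: x; case: y. Qed.
Lemma ImM (x y : R[i]) : complex.Im (x * y) = complex.Re x * complex.Im y + complex.Im x * complex.Re y.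
Proof. by case: x => a b; case: y => c d /=; ring. Qed.
Lemma ReJ (x : R[i]) : complex.Re (x^*) = complex.Re x. Proof. by case: x. Qed.
Lemma ImJ (x : R[i]) : complex.Im (x^*) = - complex.Im x. Proof. by case: x. Qed.
Lemma Re0 : complex.Re (0 : R[i]) = 0. Proof. by []. Qed.
Lemma Re_sum n (F : 'I_n -> R[i]) : complex.Re (\sum_i F i) = \sum_i complex.Re (F i).
Proof. exact: (big_morph _ ReD Re0). Qed.


Lemma eqdist (u v c : R[i]) : `|u + c| = `|v + c| ->
  (complex.Re v - complex.Re u) * (complex.Re c + (complex.Re u + complex.Re v) / 2) +
  (complex.Im v - complex.Im u) * (complex.Im c + (complex.Im u + complex.Im v) / 2) = 0.
Proof.
move/norm_eq; rewrite !ReD !ImD => h.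
have -> : (complex.Re v - complex.Re u) * (complex.Re c + (complex.Re u + complex.Re v) / 2) +
  (complex.Im v - complex.Im u) * (complex.Im c + (complex.Im u + complex.Im v) / 2) =
  ((complex.Re v + complex.Re c) ^+ 2 + (complex.Im v + complex.Im c) ^+ 2 -
   ((complex.Re u + complex.Re c) ^+ 2 + (complex.Im u + complex.Im c) ^+ 2)) / 2 by field.
by rewrite h subrr mul0r.
Qed.

Lemma bisector (u v c : R[i]) : u != v -> `|u + c| = `|v + c| ->
  let p := Complex (- (complex.Re u + complex.Re v) / 2) (- (complex.Im u + complex.Im v) / 2) in
  let e1 := complex.Re v - complex.Re u in
  let e2 := complex.Im v - complex.Im u in
  let w := Complex (- e2) e1 in
  let g1 := complex.Re c + (complex.Re u + complex.Re v) / 2 in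
  let g2 := complex.Im c + (complex.Im u + complex.Im v) / 2 in
  c = p + ((g2 * e1 - g1 * e2) / (e1 ^+ 2 + e2 ^+ 2))%:C * w.
Proof.
case: u => u1 u2; case: v => v1 v2; case: c => c1 c2 neq /eqdist /= h /=.
have nz : (v1 - u1) ^+ 2 + (v2 - u2) ^+ 2 != 0.
  apply: contra neq; rewrite paddr_eq0 ?sqr_ge0 // !sqrf_eq0 !subr_eq0.
  by case/andP => /eqP -> /eqP ->.
apply/eqP; rewrite eq_complex /=; apply/andP; split; rewrite -subr_eq0; apply/eqP.
- set t := (X in _ - X).
  have -> : c1 - t = (v1 - u1) * ((v1 - u1) * (c1 + (u1 + v1) / 2) + (v2 - u2) * (c2 + (u2 + v2) / 2))
     / ((v1 - u1) ^+ 2 + (v2 - u2) ^+ 2) by rewrite /t; field.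
  by rewrite h mulr0 mul0r.
- set t := (X in _ - X).
  have -> : c2 - t = (v2 - u2) * ((v1 - u1) * (c1 + (u1 + v1) / 2) + (v2 - u2) * (c2 + (u2 + v2) / 2))
     / ((v1 - u1) ^+ 2 + (v2 - u2) ^+ 2) by rewrite /t; field.
  by rewrite h mulr0 mul0r.
Qed.


Lemma noncol (u v c1 c2 c3 : R[i]) : u != v -> `|u + c1| = `|v + c1| ->
  `|u + c2| = `|v + c2| -> `|u + c3| = `|v + c3| -> collinear c1 c2 c3.
Proof.
move=> neq h1 h2 h3.
have nz : (complex.Re v - complex.Re u) ^+ 2 + (complex.Im v - complex.Im u) ^+ 2 != 0.
  apply: contra neq; rewrite paddr_eq0 ?sqr_ge0 // !sqrf_eq0 !subr_eq0.
  by clear h1 h2 h3; case: u v => [u1 u2] [v1 v2] /= /andP[/eqP -> /eqP ->].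
move: (bisector neq h1) (bisector neq h2) (bisector neq h3) => /= e1 e2 e3.
do 5 eexists; split; last first.
  split; first exact: e1.
  split; first exact: e2.
  exact: e3.
apply: contra nz; rewrite eq_complex /= => /andP[/eqP a /eqP b].
by rewrite b expr0n /= add0r -sqrrN a expr0n.
Qed.

Lemma cinnerE m d (M : 'M[R[i]]_(m, d)) k x :
  cinner (row k M)^T x = (map_mx conjc M *m x) k ord0.
Proof. by rewrite /cinner !mxE; apply: eq_bigr => i _; rewrite !mxE. Qed.

Lemma measE m d (A : 'M[R[i]]_(m, d)) b x i :
  affine_meas A b x i ord0 = `|cinner (row i A)^T x + b i ord0|.
Proof. by rewrite mxE. Qed.

Lemma part2 (d : nat) (B : 'M[R[i]]_d) (b1 b2 b3 : 'cV[R[i]]_d) :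
      B \in unitmx ->
      (forall j : 'I_d, ~ collinear (b1 j ord0) (b2 j ord0) (b3 j ord0)) ->
      affine_phase_retrievable (col_mx B^T (col_mx B^T B^T))
                               (col_mx b1 (col_mx b2 b3)).
Proof.
move=> uB ncol x y /matrixP h.
pose L := map_mx conjc B^T.
have uL : L \in unitmx by rewrite map_unitmx unitmx_tr.
have e : L *m x = L *m y.
  apply/matrixP => k j; rewrite (ord1 j).
  have ha := h (lshift (d + d) k) ord0.
  have hb := h (rshift d (lshift d k)) ord0.
  have hc := h (rshift d (rshift d k)) ord0.
  rewrite !measE ?rowKu ?rowKd ?rowKu ?rowKd ?col_mxEu ?col_mxEd ?col_mxEu ?col_mxEd !cinnerE in ha hb hc.
  case: (eqVneq ((L *m x) k ord0) ((L *m y) k ord0)) => // neq.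
  case: (ncol k); apply: noncol neq _ _ _.
  exact ha. exact hb. exact hc.
by rewrite -(mulKmx uL x) e mulKmx.
Qed.


Lemma norm_pm (a c : R[i]) : complex.Re (a^* * c) = 0 -> `|a + c| = `|a - c|.
Proof.
rewrite ReM ReJ ImJ => h; apply/norm_eq; rewrite !ReD !ImD !ReN !ImN.
apply/eqP; rewrite -subr_eq0; apply/eqP.
set a1 := complex.Re a; set a2 := complex.Im a; set c1 := complex.Re c; set c2 := complex.Im c.
have -> : (a1 + c1) ^+ 2 + (a2 + c2) ^+ 2 - ((a1 - c1) ^+ 2 + (a2 - c2) ^+ 2) =
  4%:R * (a1 * c1 - - a2 * c2) by ring.
by rewrite h mulr0.
Qed.

Lemma ReMC (c : R[i]) a b : complex.Re (c * Complex a b) = complex.Re c * a - complex.Im c * b.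
Proof. by case: c. Qed.

Lemma part1 m d (A : 'M[R[i]]_(m, d)) (b : 'cV[R[i]]_m) :
  affine_phase_retrievable A b -> (3 * d <= m)%N.
Proof.
move=> inj; rewrite leqNgt; apply/negP => lt.
pose Ac := map_mx conjc A.
have mE : forall x i, affine_meas A b x i ord0 = `|(Ac *m x) i ord0 + b i ord0|.
  by move=> x i; rewrite measE cinnerE.
case: (boolP (row_full Ac)) => full; last first.
  have rk : (\rank Ac^T < d)%N.
    by rewrite mxrank_tr ltn_neqAle full rank_leq_col.
  have : kermx Ac^T != 0.
    apply/eqP => k0; move: (mxrank_ker Ac^T); rewrite k0 mxrank0 => /esym/eqP.
    by rewrite subn_eq0 leqNgt rk.
  case/rowV0Pn => v /sub_kermxP hv nv.
  have hv' : Ac *m v^T = 0 by rewrite -[Ac]trmxK -trmx_mul hv trmx0.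
  have : v^T = 0.
    apply: inj; apply/matrixP => i j; rewrite (ord1 j) !mE hv' mulmx0.
    by rewrite !mxE.
  by move/eqP; rewrite -trmx0 (inj_eq (@trmx_inj _ _ _)) (negbTE nv).
pose f := fullrankfun full.
pose F := rowsub f Ac.
have uF : F \in unitmx := fullrowsub_unit full.
pose z := invmx F *m (- rowsub f b).
have Fz : F *m z = - rowsub f b by rewrite mulKVmx.
pose al := Ac *m z + b.
have al0 : forall k : 'I_d, al (f k) ord0 = 0.
  move=> k; move/matrixP/(_ k ord0): Fz.
  have -> : (F *m z) k ord0 = (Ac *m z) (f k) ord0.
    by rewrite /F /z !mxE; apply: eq_bigr => j _; rewrite !mxE.
  rewrite /al /z !mxE => ->.
  by rewrite addNr.
pose c (j : 'I_m) (k : 'I_d) := (al j ord0)^* * Ac j k.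
pose K1 : 'M[R]_(d, m) := \matrix_(k, j) complex.Re (c j k).
pose K2 : 'M[R]_(d, m) := \matrix_(k, j) - complex.Im (c j k).
pose K := col_mx K1 K2.
pose Q : 'M[R]_(m, d) := \matrix_(j, k) ((j == f k)%:R).
have cf : forall k j, c (f k) j = 0.
  move=> k j; rewrite /c al0; case: (Ac (f k) j) => a b'; apply/eqP; by rewrite eq_complex /= oppr0 !mul0r subr0 addr0 eqxx.
have KQ : K *m Q = 0.
  apply/matrixP => i k; rewrite /Q /K mxE (bigD1 (f k)) //= big1 => [|j /negbTE ne]; last first.
    by rewrite [X in _ * X]mxE ne mulr0.
  rewrite [X in _ * X]mxE eqxx mulr1 addr0 [RHS]mxE.
  by case: (split_ordP i) => i' ->; rewrite ?col_mxEu ?col_mxEd /K1 /K2 mxE cf ?oppr0.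
have rQ : (d <= \rank Q)%N.
  have : Q^T *m Q = 1%:M.
    apply/matrixP => k k'; rewrite !mxE (bigD1 (f k)) //= big1 => [|j /negbTE ne]; last first.
      by rewrite !mxE ne mul0r.
    rewrite !mxE !eqxx mul1r addr0 (inj_eq (@fullrankfun_inj _ _ _ Ac full)).
    by case: (k == k').
  move=> e; have h := mxrankM_maxl Q^T Q.
  by rewrite e mxrank1 mxrank_tr in h.
have rK : (\rank K <= m - d)%N.
  have /mxrankS : (K <= kermx Q)%MS by apply/sub_kermxP.
  rewrite mxrank_ker => h; apply: (leq_trans h); exact: leq_sub2l.
have : kermx K != 0.
  apply/eqP => k0; move: (mxrank_ker K); rewrite k0 mxrank0 => /esym/eqP.
  rewrite subn_eq0 => h.
  by move: (leq_trans h rK) lt; lia.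
case/rowV0Pn => p /sub_kermxP hp np.
pose u := lsubmx p; pose v := rsubmx p.
pose w : 'cV[R[i]]_d := \col_k Complex (u 0 k) (v 0 k).
have orth : forall j, complex.Re ((al j ord0)^* * (Ac *m w) j ord0) = 0.
  move=> j; move: hp; rewrite -[p]hsubmxK /K mul_row_col => /matrixP/(_ 0 j).
  rewrite /K1 /K2 /c /al !mxE -big_split /= => h.
  rewrite -[RHS]h mulr_sumr Re_sum; apply: eq_bigr => k _.
  rewrite mulrA /w /u /v !mxE ReMC; ring.
have addE : forall (M N : 'cV[R[i]]_m) i, (M + N) i ord0 = M i ord0 + N i ord0.
  by move=> M N i; rewrite mxE.
have subE : forall (M N : 'cV[R[i]]_m) i, (M - N) i ord0 = M i ord0 - N i ord0.
  by move=> M N i; rewrite mxE [(- N) _ _]mxE.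
have e : z + w = z - w.
  apply: inj; apply/matrixP => i j; rewrite (ord1 j) !mE mulmxDr mulmxBr addE subE.
  have := norm_pm (orth i); rewrite /al !addE => H.
  by rewrite addrAC [X in _ = `|X|]addrAC.
move/addrI/matrixP: e => e.
have u0 : forall k, u 0 k = 0 /\ v 0 k = 0.
  move=> k; move: (e k ord0); rewrite !mxE => /eqP; rewrite eq_complex /=.
  case/andP => /eqP h1 /eqP h2; split; [move: h1|move: h2]; rewrite /u /v ?mxE; lra.
move/negP: np; apply; apply/eqP; rewrite -[p]hsubmxK.
have -> : lsubmx p = 0.
  apply/matrixP => i k; rewrite (ord1 i) [RHS]mxE; exact: (u0 k).1.
have -> : rsubmx p = 0.
  apply/matrixP => i k; rewrite (ord1 i) [RHS]mxE; exact: (u0 k).2.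
by rewrite row_mx0.
Qed.



End S.

Theorem theorem3p3 :
  (forall (R : realType) (m d : nat) (A : 'M[R[i]]_(m, d)) (b : 'cV[R[i]]_m),
      affine_phase_retrievable A b -> (3 * d <= m)%N) /\
  (forall (R : realType) (d : nat) (B : 'M[R[i]]_d) (b1 b2 b3 : 'cV[R[i]]_d),
      B \in unitmx ->
      (forall j : 'I_d, ~ collinear (b1 j ord0) (b2 j ord0) (b3 j ord0)) ->
      affine_phase_retrievable (col_mx B^T (col_mx B^T B^T))
                               (col_mx b1 (col_mx b2 b3))).
Proof.
split.
- by move=> R m d A b; apply: part1.
- by move=> R d B b1 b2 b3; apply: part2.
Qed.
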